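(* Let $K=(K_{xy})$ be a real $n\times n$ matrix and define the matrix $\mathcal D=(d_{xy})$ by $$\mathcal D=\tfrac12\big(\operatorname{diag}(K)\cdot\mathbf 1^T+\mathbf 1\cdot\operatorname{diag}(K)^T\big)-K,$$ i.e. $d_{xy}=\tfrac12(K_{xx}+K_{yy})-K_{xy}$, where $\operatorname{diag}(K)$ is the column vector of diagonal entries of $K$ and $\mathbf 1=(1,\dots,1)^T$. If $\mathcal D$ has a negative entry, or if $\sqrt{d_{xy}}+\sqrt{d_{yz}}<\sqrt{d_{xz}}$ for some $x,y,z\in\{1,\dots,n\}$, then the function $\kappa(x,y)=K_{xy}$, $x,y\in\{1,\dots,n\}$, is not a proximity on $\{1,\dots,n\}$.
   Context: A proximity measure (proximity) on a set $A$ is a function $\kappa:A\times A\to\mathbb R$ satisfying the triangle inequality for proximities: for all $x,y,z\in A$, $\kappa(x,y)+\kappa(x,z)-\kappa(y,z)\le\kappa(x,x)$, and if $z=y$ and $y\neq x$ then this inequality is strict. *)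

(* Defs.v *)
From mathcomp Require Import all_boot all_order all_algebra.
Set Implicit Arguments. Unset Strict Implicit. Unset Printing Implicit Defensive.
Import Order.TTheory GRing.Theory Num.Theory.
Local Open Scope ring_scope.

Definition is_proximity (R : realFieldType) (A : Type) (kappa : A -> A -> R) : Prop :=
  (forall x y z : A, kappa x y + kappa x z - kappa y z <= kappa x x) /\
  (forall x y : A, y <> x -> kappa x y + kappa x y - kappa y y < kappa x x).

Definition Dmx (R : realFieldType) (n : nat) (K : 'M[R]_n) : 'M[R]_n :=
  2^-1 *: (\matrix_(i, j) K i i *m (const_mx 1 : 'M[R]_(1, n))
           + (const_mx 1 : 'M[R]_(n, 1)) *m \matrix_(i, j) K j j) - K.

(* Main.v *)
Require Import Defs.
From mathcomp Require Import all_boot all_order all_algebra.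
From mathcomp Require Import ring lra.
Import Order.TTheory GRing.Theory Num.Theory.
Local Open Scope ring_scope.

Lemma DmxE (R : realFieldType) n (K : 'M[R]_n) x y :
  Dmx K x y = 2^-1 * (K x x + K y y) - K x y.
Proof. by rewrite /Dmx !mxE !big_ord1 !mxE !mulr1 !mul1r. Qed.

Theorem corollary1 (R : rcfType) (n : nat) (K : 'M[R]_n) :
  ((exists x y : 'I_n, Dmx K x y < 0) \/
   (exists x y z : 'I_n,
      Num.sqrt (Dmx K x y) + Num.sqrt (Dmx K y z) < Num.sqrt (Dmx K x z))) ->
  ~ is_proximity (fun x y : 'I_n => K x y).
Proof.
move=> H [H1 H2] /=.
have sym : forall x y, K x y = K y x.
  move=> x y; have := H1 x y x; have := H1 y x y.
  by move=> a b; apply/eqP; rewrite eq_le; apply/andP; split; lra.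
have pos : forall x y, 0 <= Dmx K x y.
  move=> x y; rewrite DmxE; have [->|nxy] := eqVneq y x.
    lra.
  have h := H2 x y (elimN eqP nxy); lra.
case: H => [[x [y h]]|[x [y [z h]]]].
  by have := pos x y; lra.
have tri : Dmx K x z <= Dmx K x y + Dmx K y z.
  rewrite !DmxE; have := H1 y x z; rewrite (sym y x); lra.
have := sqr_sqrtr (pos x y); have := sqr_sqrtr (pos y z);
have := sqr_sqrtr (pos x z).
have := sqrtr_ge0 (Dmx K x y); have := sqrtr_ge0 (Dmx K y z);
have := sqrtr_ge0 (Dmx K x z).
set a := Num.sqrt (Dmx K x y) in h *; set b := Num.sqrt (Dmx K y z) in h *;
set c := Num.sqrt (Dmx K x z) in h *.
move: tri; set A := Dmx K x y; set B := Dmx K y z; set C := Dmx K x z.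
move=> tri c0 b0 a0 ec eb ea.
rewrite -ec -eb -ea in tri.
have : 0 <= a * b by apply: mulr_ge0.
have : 0 < (c - (a + b)) * (c + (a + b)) by apply: mulr_gt0; lra.
move=> p q; nra.
Qed.
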